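(* Let $q$ be a prime power, $\pi={\rm PG}(2,q)$, $C_1$ a Singer cyclic group of ${\rm PGL}(3,q)$ and $\mathcal B$ the circumscribed bundle of $\pi$ left invariant by $C_1$. Let $\mathcal C,\mathcal C'$ be two distinct conics of $\mathcal B$ and let $g\in C_1$ with $\mathcal C'=\mathcal C^g$. If $\mathcal C\cap\mathcal C'=\{B\}$ and $A\in\mathcal C$ is the point with $A^g=B$, then $B\in PP^g$ for every point $P\in\mathcal C\setminus\{A,B\}$. In particular, the line $BB^g$ is tangent to $\mathcal C$ at $B$ and the line $BB^{g^{-1}}$ is tangent to $\mathcal C'$ at $B$.
   Context: A Singer cyclic group of ${\rm PGL}(3,q)$ is a cyclic group of order $q^2+q+1$ acting regularly on the points of ${\rm PG}(2,q)$. Embedding $\pi$ in ${\rm PG}(2,q^3)$, $C_1$ fixes a unique triangle $\Delta$ with vertices in ${\rm PG}(2,q^3)\setminus{\rm PG}(2,q)$. The circumscribed bundle $\mathcal B$ is the set of non-degenerate conics of $\pi$ whose extensions over ${\rm GF}(q^3)$ contain the three vertices of $\Delta$; it consists of $q^2+q+1$ conics, any two meeting in exactly one point, and it is invariant under $C_1$. For distinct points $X,Y$, $XY$ denotes the line joining them. *)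

(* Defs.v *)
From HB Require Import structures.
From mathcomp Require Import all_boot all_order all_algebra all_field.
Set Implicit Arguments. Unset Strict Implicit. Unset Printing Implicit Defensive.
Import Order.TTheory GRing.Theory.
Local Open Scope ring_scope.

(** Points of PG(2,K) are represented by nonzero row vectors of 'rV[K]_3;
    two such vectors represent the same point iff they are proportional. *)
Definition prop_pt (K : fieldType) (u v : 'rV[K]_3) : Prop :=
  exists2 k : K, k != 0 & u = k *: v.

Definition is_scalar_mx3 (K : fieldType) (M : 'M[K]_3) : Prop :=
  exists a : K, M = a%:M.

(** A projectivity of PG(2,K) is given by an invertible matrix M acting on
    row vectors: P |-> P *m M.  *)

(** [S] generates a Singer cyclic group of PGL(3,q), q = #|F|:
    the group <S> of PGL(3,q) is cyclic of order q^2+q+1 and acts regularly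
    on the points of PG(2,q). *)
Definition singer_order (F : finFieldType) : nat := (#|F| ^ 2 + #|F| + 1)%N.

Definition is_singer (F : finFieldType) (S : 'M[F]_3) : Prop :=
  [/\ S \in unitmx,
      (* order of the image of S in PGL(3,q) is exactly q^2+q+1 *)
      is_scalar_mx3 (S ^+ singer_order F),
      (forall k, (0 < k < singer_order F)%N -> ~ is_scalar_mx3 (S ^+ k)) &
      (forall u v : 'rV[F]_3, u != 0 -> v != 0 ->
         exists k, [/\ (k < singer_order F)%N, prop_pt (u *m S ^+ k) v &
           forall k', (k' < singer_order F)%N -> prop_pt (u *m S ^+ k') v -> k' = k])].

Definition qform (K : comNzRingType) (c : 'rV[K]_6) (x : 'rV[K]_3) : K :=
  let a := c ord0 (inord 0) in let b := c ord0 (inord 1) in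
  let cc := c ord0 (inord 2) in let f := c ord0 (inord 3) in
  let g := c ord0 (inord 4) in let h := c ord0 (inord 5) in
  let x0 := x ord0 (inord 0) in let x1 := x ord0 (inord 1) in
  let x2 := x ord0 (inord 2) in
  a * x0 ^+ 2 + b * x1 ^+ 2 + cc * x2 ^+ 2 + f * x1 * x2 + g * x0 * x2
  + h * x0 * x1.

(** Non-degeneracy (valid in every characteristic): the "half determinant"
    4abc + fgh - af^2 - bg^2 - ch^2 is nonzero. *)
Definition nondeg_conic (K : comNzRingType) (c : 'rV[K]_6) : Prop :=
  let a := c ord0 (inord 0) in let b := c ord0 (inord 1) in
  let cc := c ord0 (inord 2) in let f := c ord0 (inord 3) in
  let g := c ord0 (inord 4) in let h := c ord0 (inord 5) in
  4 * a * b * cc + f * g * h - a * f ^+ 2 - b * g ^+ 2 - cc * h ^+ 2 != 0.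

Definition on_conic (K : comNzRingType) (c : 'rV[K]_6) (x : 'rV[K]_3) : Prop :=
  x != 0 /\ qform c x = 0.

Definition same_conic (K : fieldType) (c c' : 'rV[K]_6) : Prop :=
  exists2 k : K, k != 0 & c' = k *: c.

Definition image_conic (K : fieldType) (c c' : 'rV[K]_6) (M : 'M[K]_3) : Prop :=
  exists2 k : K, k != 0 & forall x : 'rV[K]_3, qform c' (x *m M) = k * qform c x.

Definition ext_mx (F : fieldType) (L : fieldExtType F) m n (A : 'M[F]_(m, n)) :
  'M[L]_(m, n) := map_mx (in_alg L) A.

(** Vertices of the triangle Delta: the points of PG(2,L) fixed by C1 = <S>. *)
Definition delta_vertex (F : fieldType) (L : fieldExtType F) (S : 'M[F]_3)
  (v : 'rV[L]_3) : Prop :=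
  v != 0 /\ prop_pt (v *m ext_mx L S) v.
Arguments delta_vertex {F} L S v.

(** The circumscribed bundle: non-degenerate conics of PG(2,q) whose extension
    over L contains the vertices of Delta. *)
Definition in_bundle (F : fieldType) (L : fieldExtType F) (S : 'M[F]_3)
  (c : 'rV[F]_6) : Prop :=
  nondeg_conic c /\
  forall v : 'rV[L]_3, delta_vertex L S v -> qform (ext_mx L c) v = 0.
Arguments in_bundle {F} L S c.

Definition rows3 (K : ringType) (X Y Z : 'rV[K]_3) : 'M[K]_3 :=
  \matrix_(i < 3, j < 3)
    (if (i == 0 :> nat) then X ord0 j else if (i == 1 :> nat) then Y ord0 j
     else Z ord0 j).

Definition on_line (K : fieldType) (Z X Y : 'rV[K]_3) : Prop :=
  [/\ X != 0, Y != 0, ~ prop_pt X Y & \det (rows3 X Y Z) = 0].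

Definition tangent_at (K : fieldType) (c : 'rV[K]_6) (B X Y : 'rV[K]_3) : Prop :=
  [/\ on_conic c B, on_line B X Y &
      forall P, on_conic c P -> on_line P X Y -> prop_pt P B].

(* Main.v *)
Require Import Defs.
From HB Require Import structures.
From mathcomp Require Import all_boot all_order all_algebra all_field.
From mathcomp Require Import ring zify.
Set Implicit Arguments. Unset Strict Implicit. Unset Printing Implicit Defensive.
Import GRing.Theory.
Local Open Scope ring_scope.

Section Basic.
Variable K : comNzRingType.

Definition v3 (a b c : K) : 'rV[K]_3 := \row_(j < 3) nth 0 [:: a; b; c] j.
Definition c6 (a b c d e f : K) : 'rV[K]_6 :=
  \row_(j < 6) nth 0 [:: a; b; c; d; e; f] j.

Lemma v3E0 a b c : (v3 a b c) ord0 (inord 0) = a.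
Proof. by rewrite mxE inordK. Qed.
Lemma v3E1 a b c : (v3 a b c) ord0 (inord 1) = b.
Proof. by rewrite mxE inordK. Qed.
Lemma v3E2 a b c : (v3 a b c) ord0 (inord 2) = c.
Proof. by rewrite mxE inordK. Qed.
Lemma c6E0 a b c d e f : (c6 a b c d e f) ord0 (inord 0) = a.
Proof. by rewrite !mxE !inordK. Qed.
Lemma c6E1 a b c d e f : (c6 a b c d e f) ord0 (inord 1) = b.
Proof. by rewrite !mxE !inordK. Qed.
Lemma c6E2 a b c d e f : (c6 a b c d e f) ord0 (inord 2) = c.
Proof. by rewrite !mxE !inordK. Qed.
Lemma c6E3 a b c d e f : (c6 a b c d e f) ord0 (inord 3) = d.
Proof. by rewrite !mxE !inordK. Qed.
Lemma c6E4 a b c d e f : (c6 a b c d e f) ord0 (inord 4) = e.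
Proof. by rewrite !mxE !inordK. Qed.
Lemma c6E5 a b c d e f : (c6 a b c d e f) ord0 (inord 5) = f.
Proof. by rewrite !mxE !inordK. Qed.

Lemma v3_eta (x : 'rV[K]_3) :
  x = v3 (x ord0 (inord 0)) (x ord0 (inord 1)) (x ord0 (inord 2)).
Proof.
apply/rowP => j; rewrite mxE; case: j => [[|[|[|//]]] Hj] /=;
  by congr (x ord0 _); apply: val_inj; rewrite /= inordK.
Qed.

Lemma c6_eta (x : 'rV[K]_6) :
  x = c6 (x ord0 (inord 0)) (x ord0 (inord 1)) (x ord0 (inord 2))
         (x ord0 (inord 3)) (x ord0 (inord 4)) (x ord0 (inord 5)).
Proof.
apply/rowP => j; rewrite mxE; case: j => [[|[|[|[|[|[|//]]]]]] Hj] /=;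
  by congr (x ord0 _); apply: val_inj; rewrite /= inordK.
Qed.

Lemma v3_eq a b c a' b' c' : v3 a b c = v3 a' b' c' -> [/\ a = a', b = b' & c = c'].
Proof.
move=> E; split.
- by have := congr1 (fun v : 'rV[K]_3 => v ord0 (inord 0)) E; rewrite /= !v3E0.
- by have := congr1 (fun v : 'rV[K]_3 => v ord0 (inord 1)) E; rewrite /= !v3E1.
- by have := congr1 (fun v : 'rV[K]_3 => v ord0 (inord 2)) E; rewrite /= !v3E2.
Qed.

Lemma sum3 (F : 'I_3 -> K) : \sum_(i < 3) F i = F (inord 0) + F (inord 1) + F (inord 2).
Proof.
rewrite !big_ord_recl big_ord0 addr0 addrA.
by congr (F _ + F _ + F _); apply: val_inj; rewrite /= inordK.
Qed.

Lemma v3D a b c a' b' c' : v3 a b c + v3 a' b' c' = v3 (a + a') (b + b') (c + c').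
Proof. by apply/rowP => j; rewrite !mxE; case: j => [[|[|[|//]]] Hj]. Qed.
Lemma v3Z k a b c : k *: v3 a b c = v3 (k * a) (k * b) (k * c).
Proof. by apply/rowP => j; rewrite !mxE; case: j => [[|[|[|//]]] Hj]. Qed.
Lemma v3N a b c : - v3 a b c = v3 (- a) (- b) (- c).
Proof. by apply/rowP => j; rewrite !mxE; case: j => [[|[|[|//]]] Hj]. Qed.
Lemma v30 : (0 : 'rV[K]_3) = v3 0 0 0.
Proof. by apply/rowP => j; rewrite !mxE; case: j => [[|[|[|//]]] Hj]. Qed.

Definition me (M : 'M[K]_3) i j := M (inord i) (inord j).

Lemma v3M a b c (M : 'M[K]_3) : v3 a b c *m M =
  v3 (a * me M 0 0 + b * me M 1 0 + c * me M 2 0)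
     (a * me M 0 1 + b * me M 1 1 + c * me M 2 1)
     (a * me M 0 2 + b * me M 1 2 + c * me M 2 2).
Proof.
apply/rowP => j; rewrite !mxE sum3 !mxE !inordK //=.
case: j => [[|[|[|//]]] Hj] /=; rewrite /me;
  by congr (_ * M _ _ + _ * M _ _ + _ * M _ _); apply: val_inj; rewrite /= ?inordK.
Qed.

Lemma qformE (c : 'rV[K]_6) a b cc :
  qform c (v3 a b cc) =
  c ord0 (inord 0) * a ^+ 2 + c ord0 (inord 1) * b ^+ 2 + c ord0 (inord 2) * cc ^+ 2
  + c ord0 (inord 3) * b * cc + c ord0 (inord 4) * a * cc + c ord0 (inord 5) * a * b.
Proof. by rewrite /qform v3E0 v3E1 v3E2. Qed.

End Basic.

Section B.
Variable K : comNzRingType.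

Definition det3f (M : 'M[K]_3) :=
  me M 0 0 * (me M 1 1 * me M 2 2 - me M 1 2 * me M 2 1)
  - me M 0 1 * (me M 1 0 * me M 2 2 - me M 1 2 * me M 2 0)
  + me M 0 2 * (me M 1 0 * me M 2 1 - me M 1 1 * me M 2 0).

Lemma det3 (M : 'M[K]_3) : \det M = det3f M.
Proof.
rewrite (expand_det_row _ ord0) sum3 /cofactor.
rewrite !(expand_det_row _ ord0) !big_ord_recl !big_ord0 /cofactor.
rewrite !det_mx11 !mxE /det3f /me.
pose g (a b : nat) := M (inord a) (inord b).
have E : forall i j : 'I_3, M i j = g i j by move=> i j; rewrite /g !inord_val.
rewrite !E /= !inordK //= /g.
rewrite /bump /=; ring.
Qed.
End B.

Section B2.
Variable K : comNzRingType.
Implicit Types (X Y Z : 'rV[K]_3) (c d : 'rV[K]_6).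

Lemma me_rows3_0 X Y Z j : me (rows3 X Y Z) 0 j = X ord0 (inord j).
Proof. by rewrite /me mxE inordK. Qed.
Lemma me_rows3_1 X Y Z j : me (rows3 X Y Z) 1 j = Y ord0 (inord j).
Proof. by rewrite /me mxE inordK. Qed.
Lemma me_rows3_2 X Y Z j : me (rows3 X Y Z) 2 j = Z ord0 (inord j).
Proof. by rewrite /me mxE inordK. Qed.

Lemma det_rows3 X Y Z : \det (rows3 X Y Z) =
  X ord0 (inord 0) * (Y ord0 (inord 1) * Z ord0 (inord 2) - Y ord0 (inord 2) * Z ord0 (inord 1))
  - X ord0 (inord 1) * (Y ord0 (inord 0) * Z ord0 (inord 2) - Y ord0 (inord 2) * Z ord0 (inord 0))
  + X ord0 (inord 2) * (Y ord0 (inord 0) * Z ord0 (inord 1) - Y ord0 (inord 1) * Z ord0 (inord 0)).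
Proof. by rewrite det3 /det3f !me_rows3_0 !me_rows3_1 !me_rows3_2. Qed.

Lemma mul_rows3 (w : 'rV[K]_3) X Y Z :
  w *m rows3 X Y Z = w ord0 (inord 0) *: X + w ord0 (inord 1) *: Y + w ord0 (inord 2) *: Z.
Proof.
rewrite {1}(v3_eta w) v3M !me_rows3_0 !me_rows3_1 !me_rows3_2.
rewrite {4}(v3_eta X) {4}(v3_eta Y) {4}(v3_eta Z) !v3Z !v3D.
done.
Qed.

Lemma row_me (M : 'M[K]_3) i : row (inord i) M = v3 (me M i 0) (me M i 1) (me M i 2).
Proof. by rewrite {1}(v3_eta (row _ M)) !mxE. Qed.

Definition bil c X Y := qform c (X + Y) - qform c X - qform c Y.

Definition Tq c (M : 'M[K]_3) :=
  c6 (qform c (row (inord 0) M)) (qform c (row (inord 1) M)) (qform c (row (inord 2) M))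
     (bil c (row (inord 1) M) (row (inord 2) M)) (bil c (row (inord 0) M) (row (inord 2) M))
     (bil c (row (inord 0) M) (row (inord 1) M)).

Lemma qT c X (M : 'M[K]_3) : qform c (X *m M) = qform (Tq c M) X.
Proof.
rewrite (v3_eta X) v3M /Tq /bil !row_me !v3D ![qform _ _]qformE.
rewrite c6E0 c6E1 c6E2 c6E3 c6E4 c6E5. ring.
Qed.

Definition hdet c :=
  4 * c ord0 (inord 0) * c ord0 (inord 1) * c ord0 (inord 2)
  + c ord0 (inord 3) * c ord0 (inord 4) * c ord0 (inord 5)
  - c ord0 (inord 0) * c ord0 (inord 3) ^+ 2 - c ord0 (inord 1) * c ord0 (inord 4) ^+ 2
  - c ord0 (inord 2) * c ord0 (inord 5) ^+ 2.

Lemma nondegE c : nondeg_conic c <-> hdet c != 0.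
Proof. by []. Qed.

Lemma hdetT c (M : 'M[K]_3) : hdet (Tq c M) = \det M ^+ 2 * hdet c.
Proof.
rewrite /hdet /Tq c6E0 c6E1 c6E2 c6E3 c6E4 c6E5 /bil !row_me !v3D !qformE det3 /det3f.
ring.
Qed.

Lemma qform_inj c d : (forall x, qform c x = qform d x) -> c = d.
Proof.
move=> H.
have H0 := H (v3 1 0 0); have H1 := H (v3 0 1 0); have H2 := H (v3 0 0 1).
have H3 := H (v3 0 1 1); have H4 := H (v3 1 0 1); have H5 := H (v3 1 1 0).
rewrite !qformE in H0 H1 H2 H3 H4 H5.
rewrite (c6_eta c) (c6_eta d).
have E0 : c ord0 (inord 0) = d ord0 (inord 0).
  by move: H0; rewrite !expr1n !expr0n /= !(mulr0, mul0r, mulr1, addr0, add0r).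
have E1 : c ord0 (inord 1) = d ord0 (inord 1).
  by move: H1; rewrite !expr1n !expr0n /= !(mulr0, mul0r, mulr1, addr0, add0r).
have E2 : c ord0 (inord 2) = d ord0 (inord 2).
  by move: H2; rewrite !expr1n !expr0n /= !(mulr0, mul0r, mulr1, addr0, add0r).
move: H3 H4 H5; rewrite !expr1n !expr0n /= !(mulr0, mul0r, mulr1, addr0, add0r) E0 E1 E2.
move=> /addrI H3 /addrI H4 /addrI H5.
by rewrite H3 H4 H5.
Qed.
End B2.

Section C.
Variable K : comNzRingType.
Implicit Types (X Y Z : 'rV[K]_3) (c d : 'rV[K]_6).

Lemma qformZc k c X : qform (k *: c) X = k * qform c X.
Proof. rewrite /qform !mxE; ring. Qed.

Lemma qformZ k c X : qform c (k *: X) = k ^+ 2 * qform c X.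
Proof. rewrite (v3_eta X) v3Z ![qform _ _]qformE; ring. Qed.

Lemma qform_comb c s t X Y :
  qform c (s *: X + t *: Y) = s ^+ 2 * qform c X + s * t * bil c X Y + t ^+ 2 * qform c Y.
Proof.
rewrite /bil (v3_eta X) (v3_eta Y) !v3Z !v3D ![qform _ _]qformE; ring.
Qed.

Lemma qform0 c : qform c 0 = 0.
Proof. by rewrite v30 [qform _ _]qformE; ring. Qed.

Variable K' : comNzRingType.
Variable f : {rmorphism K -> K'}.

Lemma qform_map c X : qform (map_mx f c) (map_mx f X) = f (qform c X).
Proof. by rewrite /qform !mxE !(rmorphD, rmorphM, rmorphXn). Qed.

Lemma bil_map c X Y : bil (map_mx f c) (map_mx f X) (map_mx f Y) = f (bil c X Y).
Proof. by rewrite /bil -map_mxD !qform_map !rmorphB. Qed.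

Lemma map_c6 (a b cc d0 e g : K) :
  map_mx f (c6 a b cc d0 e g) = c6 (f a) (f b) (f cc) (f d0) (f e) (f g).
Proof. by apply/rowP => j; rewrite !mxE; case: j => [[|[|[|[|[|[|//]]]]]] Hj] /=; rewrite ?rmorph0. Qed.

Lemma Tq_map c (M : 'M[K]_3) : map_mx f (Tq c M) = Tq (map_mx f c) (map_mx f M).
Proof. by rewrite /Tq map_c6 -!map_row !qform_map !bil_map. Qed.

Lemma hdet_map c : hdet (map_mx f c) = f (hdet c).
Proof. rewrite /hdet !mxE !(rmorphD, rmorphN, rmorphM, rmorphXn, rmorph1); ring. Qed.

Lemma det_rows3_map X Y Z : \det (rows3 (map_mx f X) (map_mx f Y) (map_mx f Z)) = f (\det (rows3 X Y Z)).
Proof. rewrite !det_rows3 !mxE !(rmorphD, rmorphN, rmorphM); ring. Qed.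

End C.

Section D.
Variable K : fieldType.
Implicit Types (X Y Z P : 'rV[K]_3) (c d : 'rV[K]_6).

Lemma lin3 (a b cc : K) X Y Z : a *: X + b *: Y + cc *: Z = 0 -> cc != 0 ->
  Z = (- a / cc) *: X + (- b / cc) *: Y.
Proof.
rewrite (v3_eta X) (v3_eta Y) (v3_eta Z) !v3Z !v3D v30 => /v3_eq [E0 E1 E2] nz.
rewrite ?v3Z ?v3D; congr v3.
- by apply: (mulfI nz); rewrite (mulrC cc) -(subr0 (_ * cc)) -E0; field.
- by apply: (mulfI nz); rewrite (mulrC cc) -(subr0 (_ * cc)) -E1; field.
- by apply: (mulfI nz); rewrite (mulrC cc) -(subr0 (_ * cc)) -E2; field.
Qed.

Lemma v3_eq0 (w : 'rV[K]_3) : w ord0 (inord 0) = 0 -> w ord0 (inord 1) = 0 ->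
  w ord0 (inord 2) = 0 -> w = 0.
Proof. by move=> a b cc; rewrite (v3_eta w) a b cc -v30. Qed.

Lemma scale_eq0_nz (k : K) X : k *: X = 0 -> X != 0 -> k = 0.
Proof. by move/eqP; rewrite scaler_eq0 => /orP [/eqP //| /eqP ->]; rewrite eqxx. Qed.

Lemma tangent_gen c B Y : B != 0 -> qform c B = 0 -> Y != 0 -> ~ prop_pt B Y ->
  bil c B Y = 0 -> qform c Y != 0 -> tangent_at c B B Y.
Proof.
move=> nzB QB nzY npBY bBY QY; split.
- by split.
- split=> //; rewrite det_rows3; ring.
move=> P [nzP QP] [_ _ _ /eqP /det0P [w nzw]].
rewrite mul_rows3 => E.
have [w2z | w2nz] := eqVneq (w ord0 (inord 2)) 0.
  exfalso; move: E; rewrite w2z scale0r addr0 => E.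
  have [w1z | w1nz] := eqVneq (w ord0 (inord 1)) 0.
    move: E; rewrite w1z scale0r addr0 => /scale_eq0_nz /(_ nzB) w0z.
    by move: nzw; rewrite (v3_eq0 w0z w1z w2z) eqxx.
  have E' : (0 : K) *: B + w ord0 (inord 0) *: B + w ord0 (inord 1) *: Y = 0.
    by rewrite scale0r add0r.
  have EY := lin3 E' w1nz.
  have [w0z | w0nz] := eqVneq (w ord0 (inord 0)) 0.
    by move: nzY; rewrite EY w0z !oppr0 !mul0r !scale0r addr0 eqxx.
  apply: npBY; exists (- w ord0 (inord 1) / w ord0 (inord 0)).
    by rewrite mulf_neq0 ?oppr_eq0 ?invr_eq0.
  rewrite EY !oppr0 !mul0r scale0r add0r scalerA.
  by rewrite [X in X *: B](_ : _ = 1) ?scale1r //; field; rewrite w0nz w1nz.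
have EP := lin3 E w2nz.
move: QP; rewrite EP qform_comb QB bBY !mulr0 !add0r => /eqP.
rewrite mulf_eq0 orbC (negbTE QY) /= expf_eq0 /= => /eqP t0.
rewrite t0 scale0r addr0 in EP.
exists (- w ord0 (inord 0) / w ord0 (inord 2)); last by rewrite t0 scale0r addr0.
by apply: contraNneq nzP => s0; rewrite EP s0 scale0r.
Qed.

End D.

Section E.
Variable F : finFieldType.
Variable S : 'M[F]_3.
Hypothesis hS : is_singer S.
Local Notation n := (singer_order F).

Lemma n_gt1 : (1 < n)%N.
Proof. rewrite /singer_order; have := finNzRing_gt1 F; move: #|F| => q hq; move: (q ^ 2)%N => r; lia. Qed.

Lemma S_unit : S \in unitmx.
Proof. by case: hS. Qed.

Lemma unitmxX (M : 'M[F]_3) m : M \in unitmx -> M ^+ m \in unitmx.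
Proof.
move=> Mu; elim: m => [|m IH]; first by rewrite expr0 unitmx1.
by rewrite exprS -mulmxE unitmx_mul Mu IH.
Qed.

Lemma Sn_scalar : exists2 s : F, s != 0 & S ^+ n = s%:M.
Proof.
case: hS => Su [s Es] _ _; exists s => //.
apply/eqP => s0; rewrite s0 in Es.
have := unitmxX n Su; rewrite Es unitmxE det_scalar expr0n /=.
by rewrite unitr0.
Qed.


Lemma S_pow_dec m : exists2 t : F, t != 0 & S ^+ m = t *: S ^+ (m %% n).
Proof.
have [s nzs Es] := Sn_scalar.
exists (s ^+ (m %/ n)); first by rewrite expf_neq0.
rewrite {1}(divn_eq m n) exprD mulnC exprM Es -scalemx1 exprZn expr1n.
by rewrite -scalerAl mul1r.
Qed.

Lemma fix_div (u : 'rV[F]_3) m : u != 0 -> prop_pt (u *m S ^+ m) u -> (m %% n = 0)%N.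
Proof.
move=> nzu [k nzk Ek].
have [t nzt Et] := S_pow_dec m.
rewrite Et -scalemxAr in Ek.
have Ek' : prop_pt (u *m S ^+ (m %% n)) u.
  exists (k / t); first by rewrite mulf_neq0 ?invr_eq0.
  by apply: (scalerI nzt); rewrite Ek scalerA mulrC divfK.
case: hS => _ _ _ /(_ u u nzu nzu) [k0 [_ _ Hu]].
have n0 : (0 < n)%N by have := n_gt1; lia.
have -> := Hu _ (ltn_pmod m n0) Ek'.
symmetry; apply: Hu => //; exists 1; first exact: oner_neq0.
by rewrite expr0 mulmx1 scale1r.
Qed.

Lemma scal_of_div m : (m %% n = 0)%N -> exists2 t : F, t != 0 & S ^+ m = t%:M.
Proof.
move=> H; have [t nzt Et] := S_pow_dec m.
by exists t => //; rewrite Et H expr0 scalemx1.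
Qed.

Lemma no_eig_F (r : F) (v : 'rV[F]_3) : v != 0 -> v *m S = r *: v -> False.
Proof.
move=> nzv E.
have [r0 | nzr] := eqVneq r 0.
  move: nzv; rewrite -(mulmxK S_unit v) E r0 scale0r mul0mx eqxx //.
have := @fix_div v 1 nzv; rewrite expr1 modn_small ?n_gt1 // => H.
by have := H (ex_intro2 _ _ r nzr E).
Qed.

Lemma no_root_char r : ~~ root (char_poly S) r.
Proof.
apply/negP => H.
have : eigenvalue S r by rewrite eigenvalue_root_min root_mxminpoly.
by case/eigenvalueP => v Ev nzv; exact: (no_eig_F nzv Ev).
Qed.

Lemma deg3 : degree_mxminpoly S = 3%N.
Proof.
have sp := size_mxminpoly S.
have d0 := mxminpoly_nonconstant S.
have dv := mxminpoly_dvd_char S.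
have chi0 : char_poly S != 0 by rewrite monic_neq0 // char_poly_monic.
have := dvdp_leq chi0 dv; rewrite size_char_poly sp => dle.
move: (degree_mxminpoly S) sp d0 dle => d sp d0 dle.
case: d sp d0 dle => [|[|[|[|d]]]] // sp _ _.
  have [r Hr] := poly2_root sp.
  by move: (no_root_char r); rewrite -root_mxminpoly Hr.
case/dvdpP: dv => r Er.
have r0 : r != 0 by apply: contra_neq chi0 => r0; rewrite Er r0 mul0r.
have p0 : mxminpoly S != 0 by rewrite -size_poly_gt0 sp.
have := size_char_poly S; rewrite Er size_mul // sp => sr.
have sr2 : size r = 2%N by move: sr; rewrite addnS /= => /(congr1 (subn^~ 2%N)); rewrite addnK.
have [z Hz] := poly2_root sr2.
by move: (no_root_char z); rewrite Er rootM Hz.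
Qed.

Lemma Sq3 : S ^+ (#|F| ^ 3) = S.
Proof.
have [s nzs Es] := Sn_scalar.
have q1 : (0 < #|F|)%N := ltnW (finNzRing_gt1 F).
have E : (#|F| ^ 3 = n * (#|F|.-1) + 1)%N.
  rewrite /singer_order; move: q1; case: #|F| => // q _ /=.
  rewrite !expnS expn0; ring.
have sq : s ^+ (#|F|.-1) = 1.
  apply: (mulIf nzs); rewrite -exprSr prednK // expf_card mul1r //.
by rewrite E exprD expr1 exprM Es -scalemx1 exprZn expr1n sq scale1r mul1r.
Qed.

End E.

Lemma three_eig (F : finFieldType) (L : fieldExtType F) (hL : \dim {: L} = 3%N)
  (S : 'M[F]_3) (hS : is_singer S) :
  exists mu0 mu1 mu2 : L, [/\ mu0 != mu1, mu0 != mu2, mu1 != mu2 &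
    [/\ eigenvalue (ext_mx L S) mu0, eigenvalue (ext_mx L S) mu1 & eigenvalue (ext_mx L S) mu2]].
Proof.
set N := (#|F| ^ 3)%N.
have dv : mxminpoly S %| 'X^N - 'X.
  apply: mxminpoly_min; rewrite rmorphB rmorphXn /= horner_mx_X Sq3 // subrr //.
have dvL : map_poly (in_alg L) (mxminpoly S) %| 'X^N - 'X.
  rewrite -(dvdp_map (in_alg L)) in dv.
  have -> : 'X^N - 'X = map_poly (in_alg L) ('X^N - 'X : {poly F}).
    by rewrite rmorphB /= map_polyXn map_polyX.
  exact: dv.
pose finL := FinFieldExtType L.
have cardL : #|finL| = N.
  have := card_vspace (fullv : {vspace finvect_type L}).
  rewrite card_vspacef => ->.
  by rewrite /N; congr (_ ^ _)%N; exact: hL.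
have gp := finField_genPoly finL.
rewrite cardL in gp.
have dv2 : map_poly (in_alg L) (mxminpoly S) %| \prod_(x <- enum finL) ('X - (x : L)%:P).
  by rewrite big_enum /=; move: dvL; rewrite gp.
have [m Hm] := dvdp_prod_XsubC dv2.
have sz := eqp_size Hm.
rewrite size_prod_XsubC -mxminpoly_map size_mxminpoly degree_mxminpoly_map deg3 // in sz.
have un : uniq (mask m (enum finL)) by apply: mask_uniq; exact: enum_uniq.
have rt : forall x : L, x \in mask m (enum finL) -> eigenvalue (ext_mx L S) x.
  move=> x Hx; rewrite eigenvalue_root_min mxminpoly_map (eqp_root Hm).
  by rewrite root_prod_XsubC.
move: sz un rt; case: (mask m (enum finL)) => [|a [|b [|c [|]]]] //= _.
rewrite !inE !negb_or => /and3P [/andP [ab ac] bc _] rt.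
by exists a, b, c; split => //; split; apply: rt; rewrite !inE eqxx ?orbT.
Qed.

Lemma lc3P (R : comNzRingType) (c0 c1 c2 : R) {g l0 l1 l2 : R} :
  l0 = 0 -> l1 = 0 -> l2 = 0 -> g = c0 * l0 + c1 * l1 + c2 * l2 -> g = 0.
Proof. by move=> -> -> -> ->; rewrite !mulr0 !addr0. Qed.
Arguments lc3P {R} c0 c1 c2 {g l0 l1 l2}.

Section H.
Variable K : fieldType.

Lemma alg1 (a b cc l0 l1 l2 x0 x1 x2 y0 y1 y2 : K) :
  a != 0 -> b != 0 -> cc != 0 ->
  a * x1 * x2 + b * x0 * x2 + cc * x0 * x1 = 0 ->
  l0 * a * x1 * x2 + l1 * b * x0 * x2 + l2 * cc * x0 * x1 = 0 ->
  a * y1 * y2 + b * y0 * y2 + cc * y0 * y1 = 0 ->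
  (x1*x2 != 0) || (x0*x2 != 0) || (x0*x1 != 0) ->
  y0 * (l1 * y1 * x2 - l2 * y2 * x1) - y1 * (l0 * y0 * x2 - l2 * y2 * x0) + y2 * (l0 * y0 * x1 - l1 * y1 * x0) = 0.
Proof.
move=> na nb nc E1 E2 E3 H.
have k0 : a * x1 * x2 * (y0 * (l1 * y1 * x2 - l2 * y2 * x1) - y1 * (l0 * y0 * x2 - l2 * y2 * x0) + y2 * (l0 * y0 * x1 - l1 * y1 * x0)) = 0.
  refine (lc3P ((l2-l1) * x0 * x1 * x2) (x2 * y0 * y1 * l1 - x1 * y0 * y2 * l2) (x1 * y0 * y2 - x2 * y0 * y1) E3 E1 E2 _); ring.
have k1 : b * x0 * x2 * (y0 * (l1 * y1 * x2 - l2 * y2 * x1) - y1 * (l0 * y0 * x2 - l2 * y2 * x0) + y2 * (l0 * y0 * x1 - l1 * y1 * x0)) = 0.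
  refine (lc3P ((l0-l2) * x0 * x1 * x2) (x0 * y1 * y2 * l2 - x2 * y0 * y1 * l0) (x2 * y0 * y1 - x0 * y1 * y2) E3 E1 E2 _); ring.
have k2 : cc * x0 * x1 * (y0 * (l1 * y1 * x2 - l2 * y2 * x1) - y1 * (l0 * y0 * x2 - l2 * y2 * x0) + y2 * (l0 * y0 * x1 - l1 * y1 * x0)) = 0.
  refine (lc3P ((l1-l0) * x0 * x1 * x2) (x1 * y0 * y2 * l0 - x0 * y1 * y2 * l1) (x0 * y1 * y2 - x1 * y0 * y2) E3 E1 E2 _); ring.
case/orP: H => [/orP [] |] H.
- have nw : a * x1 * x2 != 0 by rewrite -mulrA mulf_neq0.
  by move/eqP: k0; rewrite mulf_eq0 (negbTE nw) /= => /eqP.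
- have nw : b * x0 * x2 != 0 by rewrite -mulrA mulf_neq0.
  by move/eqP: k1; rewrite mulf_eq0 (negbTE nw) /= => /eqP.
- have nw : cc * x0 * x1 != 0 by rewrite -mulrA mulf_neq0.
  by move/eqP: k2; rewrite mulf_eq0 (negbTE nw) /= => /eqP.
Qed.

Lemma alg2 (a b cc l0 l1 l2 x0 x1 x2 : K) :
  a * x1 * x2 + b * x0 * x2 + cc * x0 * x1 = 0 ->
  l0 * a * x1 * x2 + l1 * b * x0 * x2 + l2 * cc * x0 * x1 = 0 ->
  bil (c6 0 0 0 a b cc) (v3 x0 x1 x2) (v3 (l0 * x0) (l1 * x1) (l2 * x2)) = 0.
Proof.
move=> E1 E2; rewrite /bil v3D ![qform _ _]qformE !(c6E0, c6E1, c6E2, c6E3, c6E4, c6E5).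
by apply: (lc3P (l0 + l1 + l2) (-1) 0 E1 E2 E2); ring.
Qed.

Lemma alg_E2 (a b cc a' b' c' kap l0 l1 l2 x0 x1 x2 : K) : kap != 0 ->
  a' * (l1 * l2) = kap * a -> b' * (l0 * l2) = kap * b -> c' * (l0 * l1) = kap * cc ->
  a' * x1 * x2 + b' * x0 * x2 + c' * x0 * x1 = 0 ->
  l0 * a * x1 * x2 + l1 * b * x0 * x2 + l2 * cc * x0 * x1 = 0.
Proof.
move=> nk R0 R1 R2 E; apply: (mulfI nk); rewrite mulr0.
have -> : kap * (l0 * a * x1 * x2 + l1 * b * x0 * x2 + l2 * cc * x0 * x1) =
  l0 * x1 * x2 * (kap * a) + l1 * x0 * x2 * (kap * b) + l2 * x0 * x1 * (kap * cc) by ring.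
rewrite -R0 -R1 -R2.
by apply: (lc3P (l0 * l1 * l2) 0 0 E E E); ring.
Qed.

Lemma alg3 (a b cc a' b' c' kap l0 l1 l2 x0 x1 x2 : K) :
  l0 != 0 -> l1 != 0 -> l2 != 0 ->
  a' * (l1 * l2) = kap * a -> b' * (l0 * l2) = kap * b -> c' * (l0 * l1) = kap * cc ->
  a * x1 * x2 + b * x0 * x2 + cc * x0 * x1 = 0 ->
  l0 * a * x1 * x2 + l1 * b * x0 * x2 + l2 * cc * x0 * x1 = 0 ->
  bil (c6 0 0 0 a' b' c') (v3 x0 x1 x2) (v3 (x0 / l0) (x1 / l1) (x2 / l2)) = 0.
Proof.
move=> n0 n1 n2 R0 R1 R2 E1 E2.
have -> : a' = kap * a / (l1 * l2) by rewrite -R0 mulfK // mulf_neq0.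
have -> : b' = kap * b / (l0 * l2) by rewrite -R1 mulfK // mulf_neq0.
have -> : c' = kap * cc / (l0 * l1) by rewrite -R2 mulfK // mulf_neq0.
rewrite /bil v3D ![qform _ _]qformE !(c6E0, c6E1, c6E2, c6E3, c6E4, c6E5).
apply: (lc3P (kap * (l0 * l1 + l0 * l2 + l1 * l2) / (l0 * l1 * l2) ^+ 2)
   (- kap / (l0 * l1 * l2)) 0 E2 E1 E1).
by field; rewrite n0 n1 n2.
Qed.

Lemma indep_core (a0 a1 a2 m0 m1 m2 : K) (v0 v1 v2 : 'rV[K]_3) :
  a0 *: v0 + a1 *: v1 + a2 *: v2 = 0 ->
  (a0 * m0) *: v0 + (a1 * m1) *: v1 + (a2 * m2) *: v2 = 0 ->
  (a0 * m0 ^+ 2) *: v0 + (a1 * m1 ^+ 2) *: v1 + (a2 * m2 ^+ 2) *: v2 = 0 ->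
  [/\ (a0 * ((m0 - m1) * (m0 - m2))) *: v0 = 0, (a1 * ((m1 - m0) * (m1 - m2))) *: v1 = 0
    & (a2 * ((m2 - m0) * (m2 - m1))) *: v2 = 0].
Proof.
rewrite (v3_eta v0) (v3_eta v1) (v3_eta v2) !v3Z !v3D v30.
move=> /v3_eq [A0 A1 A2] /v3_eq [B0 B1 B2] /v3_eq [C0 C1 C2].
split; congr v3.
- by apply: (lc3P (m1 * m2) (- (m1 + m2)) 1 A0 B0 C0); ring.
- by apply: (lc3P (m1 * m2) (- (m1 + m2)) 1 A1 B1 C1); ring.
- by apply: (lc3P (m1 * m2) (- (m1 + m2)) 1 A2 B2 C2); ring.
- by apply: (lc3P (m0 * m2) (- (m0 + m2)) 1 A0 B0 C0); ring.
- by apply: (lc3P (m0 * m2) (- (m0 + m2)) 1 A1 B1 C1); ring.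
- by apply: (lc3P (m0 * m2) (- (m0 + m2)) 1 A2 B2 C2); ring.
- by apply: (lc3P (m0 * m1) (- (m0 + m1)) 1 A0 B0 C0); ring.
- by apply: (lc3P (m0 * m1) (- (m0 + m1)) 1 A1 B1 C1); ring.
- by apply: (lc3P (m0 * m1) (- (m0 + m1)) 1 A2 B2 C2); ring.
Qed.

End H.

Section I.
Variable K : comNzRingType.
Implicit Types (X Y Z : 'rV[K]_3).

Lemma row_rows3_0 X Y Z : row (inord 0) (rows3 X Y Z) = X.
Proof. by apply/rowP => j; rewrite !mxE inordK. Qed.
Lemma row_rows3_1 X Y Z : row (inord 1) (rows3 X Y Z) = Y.
Proof. by apply/rowP => j; rewrite !mxE inordK. Qed.
Lemma row_rows3_2 X Y Z : row (inord 2) (rows3 X Y Z) = Z.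
Proof. by apply/rowP => j; rewrite !mxE inordK. Qed.

Lemma rows3_mul X Y Z (M : 'M[K]_3) :
  rows3 (X *m M) (Y *m M) (Z *m M) = rows3 X Y Z *m M.
Proof.
apply/row_matrixP => i; rewrite row_mul.
have -> : i = inord (val i) by rewrite inord_val.
case: i => [[|[|[|//]]] Hi] /=.
- by rewrite !row_rows3_0.
- by rewrite !row_rows3_1.
- by rewrite !row_rows3_2.
Qed.

Lemma comb_mul (x0 x1 x2 : K) X Y Z (M : 'M[K]_3) :
  (x0 *: X + x1 *: Y + x2 *: Z) *m M = x0 *: (X *m M) + x1 *: (Y *m M) + x2 *: (Z *m M).
Proof. by rewrite !mulmxDl !scalemxAl. Qed.

Lemma eig_pow X (A : 'M[K]_3) mu m : X *m A = mu *: X -> X *m A ^+ m = mu ^+ m *: X.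
Proof.
move=> E; elim: m => [|m IH]; first by rewrite !expr0 mulmx1 scale1r.
by rewrite exprSr -mulmxE mulmxA IH -scalemxAl E scalerA -exprSr.
Qed.

Variable K' : comNzRingType.
Variable f : {rmorphism K -> K'}.
Lemma map_mx_pow (A : 'M[K]_3) m : map_mx f (A ^+ m) = (map_mx f A) ^+ m.
Proof.
elim: m => [|m IH]; first by rewrite !expr0 map_mx1.
by rewrite !exprS -!mulmxE map_mxM IH.
Qed.

End I.

Lemma F_eigen (F : fieldType) (L : fieldExtType F) (S : 'M[F]_3) (u : 'rV[F]_3) (mu : L) :
  u != 0 -> ext_mx L u *m ext_mx L S = mu *: ext_mx L u -> exists r : F, u *m S = r *: u.
Proof.
move=> nzu E.
have Ej : forall i0 j, ((u *m S) i0 j)%:A = mu * (u i0 j)%:A :> L.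
  by move=> i0 j; have := congr1 (fun M : 'rV[L]_3 => M i0 j) E; rewrite /ext_mx -map_mxM !mxE /=.
have [j nzj] : exists j, u ord0 j != 0.
  apply/existsP; apply: contraR nzu; rewrite negb_exists => /forallP H.
  by apply/eqP/rowP => j; rewrite mxE; move/negPn/eqP: (H j).
set r := (u *m S) ord0 j / u ord0 j.
have Emu : mu = r%:A.
  have nzA : (u ord0 j)%:A != 0 :> L by rewrite scaler_eq0 oner_eq0 orbF.
  by rewrite /r -in_algE fmorph_div /= Ej mulfK.
exists r; apply: (map_mx_inj (f := in_alg L)).
rewrite map_mxM map_mxZ /= -Emu; exact: E.
Qed.

Lemma pp_sym (K : fieldType) (X Y : 'rV[K]_3) : prop_pt X Y -> prop_pt Y X.
Proof.
case=> t nzt ->; exists t^-1; first by rewrite invr_eq0.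
by rewrite scalerA mulVf // scale1r.
Qed.

Lemma bilT (K : comNzRingType) (c : 'rV[K]_6) (X Y : 'rV[K]_3) (M : 'M[K]_3) :
  bil c (X *m M) (Y *m M) = bil (Tq c M) X Y.
Proof. by rewrite /bil -mulmxDl !qT. Qed.

Lemma v3V (K : comNzRingType) (x0 x1 x2 : K) (v0 v1 v2 : 'rV[K]_3) :
  v3 x0 x1 x2 *m rows3 v0 v1 v2 = x0 *: v0 + x1 *: v1 + x2 *: v2.
Proof. by rewrite mul_rows3 v3E0 v3E1 v3E2. Qed.

Lemma etrans3 (T : Type) (a b c d : T) : a = b -> b = c -> c = d -> a = d.
Proof. by move=> -> ->. Qed.

Theorem lemma3p8 (F : finFieldType) (L : fieldExtType F)
  (hL : \dim {: L} = 3%N) (S : 'M[F]_3) (hS : is_singer S)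
  (c c' : 'rV[F]_6) (hc : in_bundle L S c) (hc' : in_bundle L S c')
  (hcc' : ~ same_conic c c') (k : nat) (hg : image_conic c c' (S ^+ k))
  (B : 'rV[F]_3) (hB : on_conic c B /\ on_conic c' B)
  (hBu : forall X, on_conic c X -> on_conic c' X -> prop_pt X B)
  (A : 'rV[F]_3) (hA : on_conic c A) (hAB : prop_pt (A *m S ^+ k) B) :
  (forall P : 'rV[F]_3, on_conic c P -> ~ prop_pt P A -> ~ prop_pt P B ->
     on_line B P (P *m S ^+ k))
  /\ tangent_at c B B (B *m S ^+ k)
  /\ tangent_at c' B B (B *m invmx (S ^+ k)).
Proof.
have Su := S_unit hS.
have Gu : S ^+ k \in unitmx := unitmxX k Su.
case: hg => kap nzk Hg.
have Tg : Tq c' (S ^+ k) = kap *: c by apply: qform_inj => x; rewrite -qT Hg qformZc.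
have nfix : forall u : 'rV[F]_3, u != 0 -> ~ prop_pt (u *m S ^+ k) u.
  move=> u nzu Hp; have := fix_div hS nzu Hp.
  move/(scal_of_div hS) => [t nzt Et].
  apply: hcc'; exists (kap / t ^+ 2); first by rewrite mulf_neq0 ?invr_eq0 ?expf_neq0.
  apply: qform_inj => x; rewrite qformZc.
  have := Hg (t^-1 *: x); rewrite Et mul_mx_scalar scalerA mulfV // scale1r qformZ => ->.
  by rewrite exprVn mulrA.
case: hB => [[nzB QB] [_ Q'B]].
have nzBG : B *m S ^+ k != 0.
  by apply: contraNneq nzB => H; rewrite -(mulmxK Gu B) H mul0mx.
have nBG : ~ prop_pt B (B *m S ^+ k) by move=> H; apply: (nfix B nzB); exact: pp_sym.
have [mu0 [mu1 [mu2 [d01 d02 d12 [e0 e1 e2]]]]] := three_eig hL hS.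
case/eigenvalueP: e0 => v0 Ev0 nz0.
case/eigenvalueP: e1 => v1 Ev1 nz1.
case/eigenvalueP: e2 => v2 Ev2 nz2.
have SLu : ext_mx L S \in unitmx by rewrite map_unitmx.
have munz : forall (v : 'rV[L]_3) (mu : L), v *m ext_mx L S = mu *: v -> v != 0 -> mu != 0.
  move=> v mu Ev nzv; apply/eqP => mz; move: nzv.
  by rewrite -(mulmxK SLu v) Ev mz scale0r mul0mx eqxx.
have Qv : forall (v : 'rV[L]_3) (mu : L), v *m ext_mx L S = mu *: v -> v != 0 ->
    qform (ext_mx L c) v = 0 /\ qform (ext_mx L c') v = 0.
  move=> v mu Ev nzv.
  have vt : delta_vertex L S v by split => //; exists mu; [exact: munz Ev nzv | exact: Ev].
  by split; [apply: hc.2 | apply: hc'.2].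
have [Q0 Q'0] := Qv _ _ Ev0 nz0.
have [Q1 Q'1] := Qv _ _ Ev1 nz1.
have [Q2 Q'2] := Qv _ _ Ev2 nz2.
have GLe : ext_mx L (S ^+ k) = (ext_mx L S) ^+ k by rewrite /ext_mx map_mx_pow.
have GLu : ext_mx L (S ^+ k) \in unitmx by rewrite map_unitmx.
have Gv0 : v0 *m ext_mx L (S ^+ k) = mu0 ^+ k *: v0 by rewrite GLe; apply: eig_pow.
have Gv1 : v1 *m ext_mx L (S ^+ k) = mu1 ^+ k *: v1 by rewrite GLe; apply: eig_pow.
have Gv2 : v2 *m ext_mx L (S ^+ k) = mu2 ^+ k *: v2 by rewrite GLe; apply: eig_pow.
have l0nz : mu0 ^+ k != 0 by rewrite expf_neq0 // (munz _ _ Ev0 nz0).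
have l1nz : mu1 ^+ k != 0 by rewrite expf_neq0 // (munz _ _ Ev1 nz1).
have l2nz : mu2 ^+ k != 0 by rewrite expf_neq0 // (munz _ _ Ev2 nz2).
move: (mu0 ^+ k) (mu1 ^+ k) (mu2 ^+ k) Gv0 Gv1 Gv2 l0nz l1nz l2nz => l0 l1 l2 Gv0 Gv1 Gv2 l0nz l1nz l2nz.
have Vdet : \det (rows3 v0 v1 v2) != 0.
  apply/negP => /det0P [w nzw]; rewrite mul_rows3 => Ew.
  have Ew1 := congr1 (mulmx^~ (ext_mx L S)) Ew.
  rewrite /= comb_mul Ev0 Ev1 Ev2 !scalerA mul0mx in Ew1.
  have Ew2 := congr1 (mulmx^~ (ext_mx L S)) Ew1.
  rewrite /= comb_mul Ev0 Ev1 Ev2 !scalerA mul0mx -!mulrA -!expr2 in Ew2.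
  have [h0 h1 h2] := indep_core Ew Ew1 Ew2.
  have w0 : w ord0 (inord 0) = 0.
    have /eqP := scale_eq0_nz h0 nz0.
    by rewrite mulf_eq0 !mulf_eq0 !subr_eq0 (negbTE d01) (negbTE d02) /= orbF => /eqP.
  have w1 : w ord0 (inord 1) = 0.
    have /eqP := scale_eq0_nz h1 nz1.
    by rewrite mulf_eq0 !mulf_eq0 !subr_eq0 (eq_sym mu1 mu0) (negbTE d01) (negbTE d12) /= orbF => /eqP.
  have w2 : w ord0 (inord 2) = 0.
    have /eqP := scale_eq0_nz h2 nz2.
    by rewrite mulf_eq0 !mulf_eq0 !subr_eq0 (eq_sym mu2 mu0) (eq_sym mu2 mu1) (negbTE d02) (negbTE d12) /= orbF => /eqP.
  by move: nzw; rewrite (v3_eq0 w0 w1 w2) eqxx.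
set V := rows3 v0 v1 v2.
have Vu : V \in unitmx by rewrite unitmxE unitfE.
have coords : forall X : 'rV[L]_3, exists x0, exists x1, exists x2, X = v3 x0 x1 x2 *m V.
  move=> X; exists ((X *m invmx V) ord0 (inord 0)), ((X *m invmx V) ord0 (inord 1)),
    ((X *m invmx V) ord0 (inord 2)).
  by rewrite -v3_eta mulmxKV.
set a := bil (ext_mx L c) v1 v2.
set b := bil (ext_mx L c) v0 v2.
set cc := bil (ext_mx L c) v0 v1.
set a' := bil (ext_mx L c') v1 v2.
set b' := bil (ext_mx L c') v0 v2.
set c'' := bil (ext_mx L c') v0 v1.
have cE : Tq (ext_mx L c) V = c6 0 0 0 a b cc.
  by rewrite /Tq /V row_rows3_0 row_rows3_1 row_rows3_2 Q0 Q1 Q2.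
have c'E : Tq (ext_mx L c') V = c6 0 0 0 a' b' c''.
  by rewrite /Tq /V row_rows3_0 row_rows3_1 row_rows3_2 Q'0 Q'1 Q'2.
have QE : forall x0 x1 x2, qform (ext_mx L c) (v3 x0 x1 x2 *m V) =
    a * x1 * x2 + b * x0 * x2 + cc * x0 * x1.
  by move=> x0 x1 x2; rewrite qT cE [qform _ _]qformE !(c6E0, c6E1, c6E2, c6E3, c6E4, c6E5); ring.
have Q'E : forall x0 x1 x2, qform (ext_mx L c') (v3 x0 x1 x2 *m V) =
    a' * x1 * x2 + b' * x0 * x2 + c'' * x0 * x1.
  by move=> x0 x1 x2; rewrite qT c'E [qform _ _]qformE !(c6E0, c6E1, c6E2, c6E3, c6E4, c6E5); ring.
have habc : a * b * cc != 0.
  have := hdetT (ext_mx L c) V; rewrite cE /ext_mx hdet_map.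
  have -> : hdet (c6 0 0 0 a b cc) = a * b * cc.
    by rewrite /hdet !(c6E0, c6E1, c6E2, c6E3, c6E4, c6E5); ring.
  move=> ->; rewrite mulf_neq0 ?expf_neq0 // fmorph_eq0; exact: hc.1.
have na : a != 0 by apply/eqP => a0; move: habc; rewrite a0 !mul0r eqxx.
have nb : b != 0 by apply/eqP => a0; move: habc; rewrite a0 mulr0 mul0r eqxx.
have ncc : cc != 0 by apply/eqP => a0; move: habc; rewrite a0 mulr0 eqxx.
have TgL : Tq (ext_mx L c') (ext_mx L (S ^+ k)) = in_alg L kap *: ext_mx L c.
  by rewrite /ext_mx -Tq_map Tg map_mxZ.
have HgL : forall X, qform (ext_mx L c') (X *m ext_mx L (S ^+ k)) =
    in_alg L kap * qform (ext_mx L c) X.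
  by move=> X; rewrite qT TgL qformZc.
have VG : forall x0 x1 x2, (v3 x0 x1 x2 *m V) *m ext_mx L (S ^+ k) =
    v3 (l0 * x0) (l1 * x1) (l2 * x2) *m V.
  move=> x0 x1 x2; rewrite /V !v3V comb_mul Gv0 Gv1 Gv2 !scalerA.
  by rewrite (mulrC x0) (mulrC x1) (mulrC x2).
have QQ : forall x0 x1 x2,
    a' * (l1 * x1) * (l2 * x2) + b' * (l0 * x0) * (l2 * x2) + c'' * (l0 * x0) * (l1 * x1) =
    in_alg L kap * (a * x1 * x2 + b * x0 * x2 + cc * x0 * x1).
  by move=> x0 x1 x2; rewrite -Q'E -QE -VG HgL.
have R0 : a' * (l1 * l2) = in_alg L kap * a.
  by apply: (etrans3 _ (QQ 0 1 1) _); ring.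
have R1 : b' * (l0 * l2) = in_alg L kap * b.
  by apply: (etrans3 _ (QQ 1 0 1) _); ring.
have R2 : c'' * (l0 * l1) = in_alg L kap * cc.
  by apply: (etrans3 _ (QQ 1 1 0) _); ring.
have nzkL : in_alg L kap != 0 by rewrite fmorph_eq0.
have [x0 [x1 [x2 BE]]] := coords (ext_mx L B).
have E1 : a * x1 * x2 + b * x0 * x2 + cc * x0 * x1 = 0.
  by rewrite -QE -BE /ext_mx qform_map QB rmorph0.
have E2' : a' * x1 * x2 + b' * x0 * x2 + c'' * x0 * x1 = 0.
  by rewrite -Q'E -BE /ext_mx qform_map Q'B rmorph0.
have E2 := alg_E2 nzkL R0 R1 R2 E2'.
have extM : forall (X : 'rV[F]_3) (M : 'M[F]_3), ext_mx L (X *m M) = ext_mx L X *m ext_mx L M.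
  by move=> X M; rewrite /ext_mx map_mxM.
have bil2 : bil c B (B *m S ^+ k) = 0.
  apply/eqP; rewrite -(fmorph_eq0 (in_alg L)) -bil_map.
  rewrite -[map_mx _ c]/(ext_mx L c) -[map_mx _ B]/(ext_mx L B) -[map_mx _ (B *m _)]/(ext_mx L (B *m S ^+ k)).
  rewrite extM BE VG bilT cE; apply/eqP; exact: alg2.
have QBG : qform c (B *m S ^+ k) != 0.
  apply/eqP => H; apply: (nfix B nzB); apply: hBu; split => //.
  by rewrite Hg QB mulr0.
have part2 := tangent_gen nzB QB nzBG nBG bil2 QBG.
set Y := B *m invmx (S ^+ k).
have YG : Y *m S ^+ k = B by rewrite /Y mulmxKV.
have nzY : Y != 0 by apply/eqP => H; move: nzB; rewrite -YG H mul0mx eqxx.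
have nBY : ~ prop_pt B Y.
  case=> t nzt Et; apply: (nfix B nzB); exists t => //.
  by rewrite {1}Et -scalemxAl YG.
have QY : qform c' Y != 0.
  apply/eqP => H; apply: nBG.
  have QcY : qform c Y = 0.
    by move: (Hg Y); rewrite YG Q'B => /esym /eqP; rewrite mulf_eq0 (negbTE nzk) /= => /eqP.
  have [t nzt Et] : prop_pt Y B by apply: hBu.
  exists t => //; by rewrite -{1}YG Et -scalemxAl.
have YL : ext_mx L Y = v3 (x0 / l0) (x1 / l1) (x2 / l2) *m V.
  rewrite /Y extM /ext_mx map_invmx -/(ext_mx L (S ^+ k)) -/(ext_mx L B) BE.
  rewrite -[v3 x0 x1 x2]/(v3 x0 x1 x2).
  have -> : v3 x0 x1 x2 *m V = (v3 (x0 / l0) (x1 / l1) (x2 / l2) *m V) *m ext_mx L (S ^+ k).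
    by rewrite VG !(mulrC _ (_ / _)) !divfK.
  by rewrite mulmxK.
have bil3 : bil c' B Y = 0.
  apply/eqP; rewrite -(fmorph_eq0 (in_alg L)) -bil_map.
  rewrite -[map_mx _ c']/(ext_mx L c') -[map_mx _ B]/(ext_mx L B) -[map_mx _ Y]/(ext_mx L Y).
  rewrite YL BE bilT c'E; apply/eqP; exact: (alg3 l0nz l1nz l2nz R0 R1 R2 E1 E2).
have part3 := tangent_gen nzB Q'B nzY nBY bil3 QY.
split; last by split.
have nv : (x1 * x2 != 0) || (x0 * x2 != 0) || (x0 * x1 != 0).
  apply: contraT => /norP [/norP [/negPn h12 /negPn h02] /negPn h01]; exfalso.
  have novert : forall (v : 'rV[L]_3) (mu x : L), v *m ext_mx L S = mu *: v ->
      ext_mx L B = x *: v -> False.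
    move=> v mu x Ev EB.
    have EBS : ext_mx L B *m ext_mx L S = mu *: ext_mx L B.
      by rewrite EB -scalemxAl Ev !scalerA mulrC.
    have [r Er] := F_eigen nzB EBS.
    exact: (no_eig_F hS nzB Er).
  have key : ((x1 == 0) && (x2 == 0)) || ((x0 == 0) && (x2 == 0)) || ((x0 == 0) && (x1 == 0)).
    move: h12 h02 h01; rewrite !mulf_eq0.
    by case: (x0 == 0); case: (x1 == 0); case: (x2 == 0).
  move: BE; rewrite /V v3V.
  case/orP: key => [/orP [] /andP [/eqP z1 /eqP z2] | /andP [/eqP z1 /eqP z2]];
    rewrite z1 z2 !scale0r ?addr0 ?add0r => EB.
  - exact: (novert _ _ _ Ev0 EB).
  - exact: (novert _ _ _ Ev1 EB).
  - exact: (novert _ _ _ Ev2 EB).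
move=> P [nzP QP] _ _.
have nzPG : P *m S ^+ k != 0.
  by apply/eqP => H; move: nzP; rewrite -(mulmxK Gu P) H mul0mx eqxx.
split => //.
  by move=> H; apply: (nfix P nzP); exact: pp_sym.
have [y0 [y1 [y2 PE]]] := coords (ext_mx L P).
have E3 : a * y1 * y2 + b * y0 * y2 + cc * y0 * y1 = 0.
  by rewrite -QE -PE /ext_mx qform_map QP rmorph0.
apply/eqP; rewrite -(fmorph_eq0 (in_alg L)) -det_rows3_map.
rewrite -[map_mx _ P]/(ext_mx L P) -[map_mx _ B]/(ext_mx L B) -[map_mx _ (P *m _)]/(ext_mx L (P *m S ^+ k)).
rewrite extM PE BE VG rows3_mul det_mulmx det_rows3 !(v3E0, v3E1, v3E2).
by rewrite (alg1 na nb ncc E1 E2 E3 nv) mul0r.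
Qed.
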